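(* Let $M_{i}=\begin{pmatrix}a_{i} & b_{i}\\ c_{i} & d_{i}\end{pmatrix}$, $i\ge1$, be any sequence of $2\times2$ complex matrices, and let $(G_i,F_i)$, $i\ge1$, be a sequence of nonzero row vectors. Then $(G_{i},F_{i})$ is a left eigenvector of $(M_i)$ (with some eigenvalues $\lambda_i$) if and only if $\begin{pmatrix}F_{i}\\ -G_{i}\end{pmatrix}$ is a right eigenvector of $(M_i)$ (with some eigenvalues $\alpha_i$). Moreover, if $(G_i,F_i)$ is a left eigenvector with eigenvalues $\lambda_i$, $\begin{pmatrix}F_{i}\\ -G_{i}\end{pmatrix}$ is the corresponding right eigenvector with eigenvalues $\alpha_i$, and $F_{i}\neq0$ for all $i$, then setting $U_{i}=\begin{pmatrix}F_{i}^{-1} & 0\\ G_{i} & F_{i}\end{pmatrix}$ we have \[ U_{i}M_{i}U_{i+1}^{-1}=\begin{pmatrix}\alpha_{i} & \frac{b_{i}}{F_{i}F_{i+1}}\\ 0 & \lambda_{i}\end{pmatrix}, \] and in particular $\alpha_{i}\lambda_{i}=\det(M_{i})$.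
   Context: For a sequence of $2\times2$ matrices $M_i$: a sequence $v(i)$ of nonzero row vectors is a left eigenvector with eigenvalues $\lambda(i)\in\mathbb{C}$ if $v(i)M_{i}=\lambda(i)v(i+1)$ for all $i$; a sequence $u(i)$ of nonzero column vectors is a right eigenvector with eigenvalues $\alpha(i)\in\mathbb{C}$ if $M_{i}u(i+1)=\alpha(i)u(i)$ for all $i$. *)

(* Defs.v *)
From HB Require Import structures.
From mathcomp Require Import all_boot all_order all_algebra.
From mathcomp Require Import complex.
From mathcomp Require Import reals.
Set Implicit Arguments. Unset Strict Implicit. Unset Printing Implicit Defensive.
Import Order.TTheory GRing.Theory Num.Theory.
Local Open Scope ring_scope.

Definition row2 {K : nzRingType} (a b : K) : 'rV[K]_2 :=
  \row_(j < 2) if j == 0 :> nat then a else b.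

Definition col2 {K : nzRingType} (a b : K) : 'cV[K]_2 :=
  \col_(i < 2) if i == 0 :> nat then a else b.

Definition mx2 {K : nzRingType} (a b c d : K) : 'M[K]_2 :=
  \matrix_(i < 2, j < 2)
     if i == 0 :> nat then (if j == 0 :> nat then a else b)
     else (if j == 0 :> nat then c else d).

(* Sequences are indexed by nat, only indices i >= 1 matter. *)
Definition left_eigvec {K : nzRingType} (M : nat -> 'M[K]_2)
    (v : nat -> 'rV[K]_2) (lam : nat -> K) : Prop :=
  forall i : nat, (0 < i)%N -> v i != 0 /\ v i *m M i = lam i *: v i.+1.

Definition right_eigvec {K : nzRingType} (M : nat -> 'M[K]_2)
    (u : nat -> 'cV[K]_2) (alpha : nat -> K) : Prop :=
  forall i : nat, (0 < i)%N -> u i != 0 /\ M i *m u i.+1 = alpha i *: u i.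

(* Main.v *)
Require Import Defs.
From HB Require Import structures.
From mathcomp Require Import all_boot all_order all_algebra.
From mathcomp Require Import complex.
From mathcomp Require Import reals ring.
Import Order.TTheory GRing.Theory Num.Theory.
Local Open Scope ring_scope.

Section S.
Variable K : fieldType.
Implicit Types a b c d x y p q k : K.

Lemma det2 (A : 'M[K]_2) : \det A = A 0 0 * A 1 1 - A 0 1 * A 1 0.
Proof.
rewrite (expand_det_row _ 0) !big_ord_recl big_ord0 /cofactor !det_mx11 !mxE /=.
rewrite addr0 expr0 expr1 mul1r mulN1r mulrN.
by congr (A _ _ * A _ _ - A _ _ * A _ _); apply/val_inj.


Qed.

Lemma mx2E (A : 'M[K]_2) : A = mx2 (A 0 0) (A 0 1) (A 1 0) (A 1 1).
Proof.
apply/matrixP => i j; rewrite !mxE.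
case: i => [[|[|//]] Hi]; case: j => [[|[|//]] Hj] /=; congr (A _ _); exact/val_inj.
Qed.

Lemma row2_eq a b c d : (row2 a b = row2 c d :> 'rV[K]_2) <-> (a = c /\ b = d).
Proof.
split => [H|[-> ->]//]; split.
  by move: (congr1 (fun m : 'rV[K]_2 => m 0 0) H); rewrite !mxE.
by move: (congr1 (fun m : 'rV[K]_2 => m 0 1) H); rewrite !mxE.
Qed.

Lemma col2_eq a b c d : (col2 a b = col2 c d :> 'cV[K]_2) <-> (a = c /\ b = d).
Proof.
split => [H|[-> ->]//]; split.
  by move: (congr1 (fun m : 'cV[K]_2 => m 0 0) H); rewrite !mxE.
by move: (congr1 (fun m : 'cV[K]_2 => m 1 0) H); rewrite !mxE.
Qed.

Lemma mx2_eq a b c d a' b' c' d' :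
  a = a' -> b = b' -> c = c' -> d = d' -> mx2 a b c d = mx2 a' b' c' d' :> 'M[K]_2.
Proof. by move=> -> -> -> ->. Qed.

Lemma row2_nz a b : row2 a b != 0 :> 'rV[K]_2 -> a != 0 \/ b != 0.
Proof.
case: (eqVneq a 0) => [->|]; last by left.
case: (eqVneq b 0) => [->|]; last by right.
move/eqP => []; apply/matrixP => i j; rewrite !mxE; by case: ifP.
Qed.

Lemma col2_nz a b : col2 a b != 0 :> 'cV[K]_2 -> a != 0 \/ b != 0.
Proof.
case: (eqVneq a 0) => [->|]; last by left.
case: (eqVneq b 0) => [->|]; last by right.
move/eqP => []; apply/matrixP => i j; rewrite !mxE; by case: ifP.
Qed.

Lemma row2_nz' a b : a != 0 \/ b != 0 -> row2 a b != 0 :> 'rV[K]_2.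
Proof.
move=> H; apply/eqP => E; case: H => /eqP [].
  by move: (congr1 (fun m : 'rV[K]_2 => m 0 0) E); rewrite !mxE.
by move: (congr1 (fun m : 'rV[K]_2 => m 0 1) E); rewrite !mxE.
Qed.

Lemma col2_nz' a b : a != 0 \/ b != 0 -> col2 a b != 0 :> 'cV[K]_2.
Proof.
move=> H; apply/eqP => E; case: H => /eqP [].
  by move: (congr1 (fun m : 'cV[K]_2 => m 0 0) E); rewrite !mxE.
by move: (congr1 (fun m : 'cV[K]_2 => m 1 0) E); rewrite !mxE.
Qed.

Lemma row2Z k a b : k *: row2 a b = row2 (k * a) (k * b) :> 'rV[K]_2.
Proof. by apply/matrixP => i j; rewrite !mxE; case: ifP. Qed.

Lemma col2Z k a b : k *: col2 a b = col2 (k * a) (k * b) :> 'cV[K]_2.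
Proof. by apply/matrixP => i j; rewrite !mxE; case: ifP. Qed.

Lemma row2_mul x y a b c d :
  row2 x y *m mx2 a b c d = row2 (x * a + y * c) (x * b + y * d) :> 'rV[K]_2.
Proof.
apply/matrixP => i j; rewrite !mxE !big_ord_recl big_ord0 !mxE /= addr0.
by case: ifP.
Qed.

Lemma col2_mul x y a b c d :
  mx2 a b c d *m col2 x y = col2 (a * x + b * y) (c * x + d * y) :> 'cV[K]_2.
Proof.
apply/matrixP => i j; rewrite !mxE !big_ord_recl big_ord0 !mxE /= addr0.
by case: ifP.
Qed.

Lemma mx2_mul a b c d (a' b' c' d' : K) :
  mx2 a b c d *m mx2 a' b' c' d' =
  mx2 (a * a' + b * c') (a * b' + b * d') (c * a' + d * c') (c * b' + d * d') :> 'M[K]_2.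
Proof.
apply/matrixP => i j; rewrite !mxE !big_ord_recl big_ord0 !mxE /= addr0.
by case: ifP; case: ifP.
Qed.

Lemma mx2_det a b c d : \det (mx2 a b c d : 'M[K]_2) = a * d - b * c.
Proof. by rewrite det2 !mxE. Qed.

Lemma par x y p q : x != 0 \/ y != 0 -> p * y = q * x ->
  p = (if x != 0 then p / x else q / y) * x /\ q = (if x != 0 then p / x else q / y) * y.
Proof.
case: (eqVneq x 0) => [->|hx] /=.
  case => // hy; rewrite mulr0 => E; split.
    by move/eqP: E; rewrite mulf_eq0 (negbTE hy) orbF => /eqP ->; rewrite mulr0.
  by rewrite mulfVK.
move=> _ E; split; first by rewrite mulfVK.
by rewrite mulrAC E mulfK.
Qed.
End S.
Lemma core_lr {K : fieldType} (G F G' F' a b c d l : K) :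
  G * a + F * c = l * G' -> G * b + F * d = l * F' -> F != 0 \/ - G != 0 ->
  let w0 := a * F' + b * (- G') in let w1 := c * F' + d * (- G') in
  let k := if F != 0 then w0 / F else w1 / (- G) in
  w0 = k * F /\ w1 = k * (- G).
Proof.
move=> e1 e2 nz w0 w1 k; apply: par => //.
apply/eqP; rewrite -subr_eq0.
have -> : w0 * - G - w1 * F = - (F' * (G * a + F * c) - G' * (G * b + F * d)).
  by rewrite /w0 /w1; ring.
by rewrite e1 e2; apply/eqP; ring.
Qed.

Lemma core_rl {K : fieldType} (G F G' F' a b c d l : K) :
  a * F' + b * (- G') = l * F -> c * F' + d * (- G') = l * (- G) -> G' != 0 \/ F' != 0 ->
  let p := G * a + F * c in let q := G * b + F * d in
  let k := if G' != 0 then p / G' else q / F' in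
  p = k * G' /\ q = k * F'.
Proof.
move=> e1 e2 nz p q k; apply: par => //.
apply/eqP; rewrite -subr_eq0.
have -> : p * F' - q * G' = G * (a * F' + b * (- G')) + F * (c * F' + d * (- G')).
  by rewrite /p /q; ring.
by rewrite e1 e2; apply/eqP; ring.
Qed.

Theorem lemma26 (R : realType) (M : nat -> 'M[R[i]]_2) (G F : nat -> R[i])
  (hnz : forall i : nat, (0 < i)%N -> row2 (G i) (F i) != 0) :
  ((exists lam : nat -> R[i], left_eigvec M (fun i => row2 (G i) (F i)) lam) <->
   (exists alpha : nat -> R[i], right_eigvec M (fun i => col2 (F i) (- G i)) alpha))
  /\
  (forall lam alpha : nat -> R[i],
     left_eigvec M (fun i => row2 (G i) (F i)) lam ->
     right_eigvec M (fun i => col2 (F i) (- G i)) alpha ->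
     (forall i : nat, (0 < i)%N -> F i != 0) ->
     forall i : nat, (0 < i)%N ->
       let U := fun k : nat => mx2 (F k)^-1 0 (G k) (F k) in
       U i *m M i *m invmx (U i.+1)
         = mx2 (alpha i) (M i 0 1 / (F i * F i.+1)) 0 (lam i)
       /\ alpha i * lam i = \det (M i)).
Proof.
split; [split|].
- case=> lam hl.
  exists (fun i => if F i != 0 then (M i 0 0 * F i.+1 + M i 0 1 * (- G i.+1)) / F i
          else (M i 1 0 * F i.+1 + M i 1 1 * (- G i.+1)) / (- G i)).
  move=> i hi; have [_ /=] := hl i hi.
  rewrite [M i](mx2E _) row2_mul row2Z => /row2_eq [e1 e2].
  have nz : F i != 0 \/ - G i != 0.
    by move/row2_nz: (hnz i hi) => -[h|h]; [right; rewrite oppr_eq0|left].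
  split; first by apply: col2_nz'.
  rewrite [in LHS](mx2E _ (M i)) col2_mul col2Z; apply/col2_eq.
  rewrite !mxE /=; by move: (core_lr _ _ _ _ _ _ _ _ _ e1 e2 nz).
- case=> alpha hr.
  exists (fun i => if G i.+1 != 0 then (G i * M i 0 0 + F i * M i 1 0) / G i.+1
          else (G i * M i 0 1 + F i * M i 1 1) / F i.+1).
  move=> i hi; have [_ /=] := hr i hi.
  rewrite [M i](mx2E _) col2_mul col2Z => /col2_eq [e1 e2].
  have nz : G i.+1 != 0 \/ F i.+1 != 0 by apply: row2_nz; apply: hnz.
  split; first by apply: hnz.
  rewrite [in LHS](mx2E _ (M i)) row2_mul row2Z; apply/row2_eq.
  rewrite !mxE /=; by move: (core_rl _ _ _ _ _ _ _ _ _ e1 e2 nz).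
- move=> lam alpha hl hr hF i hi U.
  have [_ E] := hl i hi; rewrite /= [M i](mx2E _) row2_mul row2Z in E.
  move/row2_eq: E => [e1 e2].
  have [_ E] := hr i hi; rewrite /= [M i](mx2E _) col2_mul col2Z in E.
  move/col2_eq: E => [r1 r2].
  have Fi := hF i hi; have Fi1 := hF i.+1 isT.
  have uU : forall k, F k != 0 -> U k \in unitmx.
    by move=> k hk; rewrite unitmxE /U mx2_det mul0r subr0 mulVf // unitr1.
  have H : U i *m M i = mx2 (alpha i) (M i 0 1 / (F i * F i.+1)) 0 (lam i) *m U i.+1.
    rewrite [M i](mx2E _) /U !mx2_mul !mxE /=; apply: mx2_eq.
    + have -> : alpha i = (M i 0 0 * F i.+1 + M i 0 1 * - G i.+1) / F i by rewrite r1 mulfK.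
      by field; apply/andP.
    + by field; apply/andP.
    + by rewrite e1; ring.
    + by rewrite e2; ring.
  have HH : U i *m M i *m invmx (U i.+1) = mx2 (alpha i) (M i 0 1 / (F i * F i.+1)) 0 (lam i).
    by rewrite H mulmxK // uU.
  split => //.
  have := congr1 determinant HH.
  rewrite !det_mulmx det_inv /U !mx2_det !mul0r !subr0 !mulVf // mul1r invr1 mulr1.
  by rewrite mulr0 subr0 => ->.
Qed.
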